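(* Suppose that $2\le n_0<\infty$ and that $S$ is submultiplicative on $[1,n_0]$. Then there exists $\varepsilon_0>0$ such that for all $0<\varepsilon<\varepsilon_0$ the extension $S_\varepsilon$ of $S$ to $[1,n_0^2]$ defined by $$S_\varepsilon(x)=\begin{cases}S(x),&1\le x\le n_0,\\ S(n_0)+\varepsilon(x-n_0),& n_0<x\le n_0^2,\end{cases}$$ is submultiplicative on $[1,n_0^2]$.
   Context: Let $2\le n_0\le\infty$ and let $S$ be a real-valued function on $[1,n_0]$ (on $[1,\infty)$ if $n_0=\infty$). $S$ is called submultiplicative on $[1,n_0]$ if: (a) $S$ is piecewise-linear, continuous, strictly increasing and concave; (b) $S(x)=x$ for $1\le x\le 2$; (c) $S(xy)\le S(x)S(y)$ for all $x,y$ with $1\le x,y,xy\le n_0$. *)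

(* Defs.v *)
From Stdlib Require Import Reals Lra.
Open Scope R_scope.

Definition piecewise_linear_on (a b : R) (f : R -> R) : Prop :=
  exists (n : nat) (p : nat -> R),
    p 0%nat = a /\ p n = b /\
    (forall i, (i < n)%nat -> p i < p (S i)) /\
    (forall i, (i < n)%nat -> exists m c : R,
        forall x, p i <= x <= p (S i) -> f x = m * x + c).

Definition continuous_on_interval (a b : R) (f : R -> R) : Prop :=
  forall x, a <= x <= b -> forall eps, 0 < eps -> exists delta, 0 < delta /\
    forall y, a <= y <= b -> Rabs (y - x) < delta -> Rabs (f y - f x) < eps.

Definition strictly_increasing_on (a b : R) (f : R -> R) : Prop :=
  forall x y, a <= x <= b -> a <= y <= b -> x < y -> f x < f y.

Definition concave_on (a b : R) (f : R -> R) : Prop :=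
  forall x y t, a <= x <= b -> a <= y <= b -> 0 <= t <= 1 ->
    t * f x + (1 - t) * f y <= f (t * x + (1 - t) * y).

Definition submultiplicative_on (n0 : R) (S : R -> R) : Prop :=
  piecewise_linear_on 1 n0 S /\ continuous_on_interval 1 n0 S /\
  strictly_increasing_on 1 n0 S /\ concave_on 1 n0 S /\
  (forall x, 1 <= x <= 2 -> S x = x) /\
  (forall x y, 1 <= x -> 1 <= y -> x * y <= n0 -> S (x * y) <= S x * S y).

Definition S_ext (S : R -> R) (n0 eps : R) (x : R) : R :=
  if Rle_dec x n0 then S x else S n0 + eps * (x - n0).

(* Main.v *)
Require Import Defs.
From Stdlib Require Import Reals Lra Lia Psatz.
Open Scope R_scope.

Lemma mono_p (n : nat) (p : nat -> R) :
  (forall i, (i < n)%nat -> p i < p (S i)) ->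
  forall i j, (i <= j)%nat -> (j <= n)%nat -> p i <= p j.
Proof.
  intros Hp i j Hij Hjn. induction j as [|j IH].
  - assert (i = 0%nat) by lia. subst. lra.
  - destruct (Nat.eq_dec i (S j)) as [->|Hne]; [lra|].
    assert (p i <= p j) by (apply IH; lia).
    assert (p j < p (S j)) by (apply Hp; lia). lra.
Qed.

Lemma slope_lb (n0 : R) (f : R -> R) : 2 <= n0 -> submultiplicative_on n0 f ->
  exists m, 0 < m /\ forall a b, 1 <= a -> a <= b -> b <= n0 -> m*(b-a) <= f b - f a.
Proof.
  intros H2 [[n [p [Hp0 [Hpn [Hinc Haff]]]]] [_ [Hsi [Hcc _]]]].
  destruct n as [|k]. { rewrite Hp0 in Hpn. lra. }
  destruct (Haff k (Nat.lt_succ_diag_r k)) as [m [c Hmc]].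
  rewrite Hpn in Hmc.
  set (q := p k) in *.
  assert (Hq1 : 1 <= q). { rewrite <- Hp0. unfold q. apply (mono_p (S k) p Hinc); lia. }
  assert (Hqn : q < n0). { rewrite <- Hpn. unfold q. apply Hinc. lia. }
  assert (Efq : f q = m*q + c) by (apply Hmc; lra).
  assert (Efn : f n0 = m*n0 + c) by (apply Hmc; lra).
  assert (Hm : 0 < m).
  { assert (f q < f n0) by (apply Hsi; lra). nra. }
  assert (St1 : forall b, 1 <= b -> b <= n0 -> f b - m*b <= f n0 - m*n0).
  { intros b Hb1 Hbn. destruct (Rle_lt_dec q b) as [Hqb|Hbq].
    - rewrite (Hmc b) by lra. lra.
    - set (t := (n0-q)/(n0-b)).
      assert (Ht : t*(n0-b) = n0-q) by (unfold t; field; lra).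
      assert (Ht0 : 0 < t) by (unfold t; apply Rdiv_lt_0_compat; lra).
      assert (Ht1 : t <= 1) by nra.
      assert (Hq : q = t*b + (1-t)*n0) by nra.
      pose proof (Hcc b n0 t (conj Hb1 Hbn) (conj (Rle_trans _ _ _ (Rlt_le _ _ (Rlt_le_trans 1 2 n0 ltac:(lra) H2)) (Rle_refl n0)) (Rle_refl n0)) (conj (Rlt_le _ _ Ht0) Ht1)) as Hc.
      rewrite <- Hq, Efq, Efn in Hc.
      assert (t*(f b - m*b - c) <= 0) by nra.
      assert (f b - m*b - c <= 0) by nra. lra. }
  exists m. split; [exact Hm|].
  intros a b Ha1 Hab Hbn.
  destruct (Rle_lt_dec n0 b) as [Hnb|Hbn'].
  { assert (b = n0) by lra. subst b. pose proof (St1 a Ha1 ltac:(lra)). lra. }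
  destruct (Rle_lt_dec b a) as [Hba|Hab'].
  { assert (a = b) by lra. subst. lra. }
  set (t := (n0-b)/(n0-a)).
  assert (Ht : t*(n0-a) = n0-b) by (unfold t; field; lra).
  assert (Ht0 : 0 < t) by (unfold t; apply Rdiv_lt_0_compat; lra).
  assert (Ht1 : t <= 1) by nra.
  assert (Hb : b = t*a + (1-t)*n0) by nra.
  assert (Hn1 : 1 <= n0 <= n0) by lra.
  pose proof (Hcc a n0 t ltac:(lra) Hn1 ltac:(lra)) as Hc.
  rewrite <- Hb in Hc.
  pose proof (St1 a Ha1 ltac:(lra)) as Ga.
  assert ((1-t)*((f n0 - m*n0) - (f a - m*a)) >= 0).
  { apply Rle_ge, Rmult_le_pos; lra. }
  nra.
Qed.

Section M.
Variables (n0 eps m : R) (f : R -> R).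
Hypotheses (H2 : 2 <= n0) (Hsub : submultiplicative_on n0 f) (Hm : 0 < m)
  (Hsl : forall a b, 1 <= a -> a <= b -> b <= n0 -> m*(b-a) <= f b - f a)
  (He : 0 < eps) (Hem : eps * (n0*n0) <= m).

Let F := S_ext f n0 eps.
Lemma Fle x : x <= n0 -> F x = f x.
Proof. intros; unfold F, S_ext; destruct (Rle_dec x n0); [reflexivity|lra]. Qed.
Lemma Fge x : n0 <= x -> F x = f n0 + eps*(x-n0).
Proof. intros; unfold F, S_ext; destruct (Rle_dec x n0).
  - assert (x = n0) by lra. rewrite H0. ring. - reflexivity. Qed.

Lemma em : eps <= m. Proof. assert (eps*(n0*n0-1) >= 0) by (apply Rle_ge, Rmult_le_pos; nra). nra. Qed.
Lemma emn : eps * n0 <= m. Proof. assert (eps*n0*(n0-1) >= 0) by (apply Rle_ge, Rmult_le_pos; nra). nra. Qed.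

Lemma f1 : f 1 = 1.
Proof. destruct Hsub as [_ [_ [_ [_ [H _]]]]]. apply H; lra. Qed.
Lemma fge1 y : 1 <= y -> y <= n0 -> 1 + m*(y-1) <= f y.
Proof. intros. pose proof (Hsl 1 y ltac:(lra) H H0). rewrite f1 in H1. lra. Qed.

Lemma conc_aux x y t : 1 <= x -> x <= y -> 0 <= t <= 1 ->
  t * F x + (1-t) * F y <= F (t*x + (1-t)*y).
Proof.
  intros Hx Hxy Ht.
  destruct Hsub as [_ [_ [_ [Hcc _]]]].
  set (z := t*x + (1-t)*y).
  assert (Hz1 : x <= z) by (unfold z; nra).
  assert (Hz2 : z <= y) by (unfold z; nra).
  destruct (Rle_lt_dec y n0) as [Hy|Hy].
  { rewrite !Fle by lra. apply Hcc; lra. }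
  destruct (Rle_lt_dec n0 x) as [Hx'|Hx'].
  { rewrite !Fge by lra. apply Req_le. unfold z. ring. }
  rewrite (Fle x) by lra. rewrite (Fge y) by lra.
  pose proof (Hsl x n0 Hx ltac:(lra) ltac:(lra)) as Sx.
  pose proof em as Em.
  assert (Sx' : eps*(n0-x) <= f n0 - f x).
  { assert (eps*(n0-x) <= m*(n0-x)) by (apply Rmult_le_compat_r; lra). lra. }
  destruct (Rle_lt_dec n0 z) as [Hz|Hz].
  { rewrite Fge by lra.
    assert (t*(f n0 - f x - eps*(n0-x)) >= 0) by (apply Rle_ge, Rmult_le_pos; lra).
    unfold z. nra. }
  rewrite Fle by lra.
  set (s := (n0-z)/(n0-x)).
  assert (Hs : s*(n0-x) = n0-z) by (unfold s; field; lra).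
  assert (Hs0 : 0 <= s) by (unfold s; apply Rlt_le, Rdiv_lt_0_compat; lra).
  assert (Hs1 : s <= 1) by nra.
  assert (Hzs : z = s*x + (1-s)*n0) by nra.
  pose proof (Hcc x n0 s ltac:(lra) ltac:(lra) ltac:(lra)) as Hc.
  rewrite <- Hzs in Hc.
  assert (B : (t-s)*(n0-x) = (1-t)*(y-n0)) by (unfold z in Hs; nra).
  assert (Hts : 0 <= t - s).
  { assert (0 <= (1-t)*(y-n0)) by (apply Rmult_le_pos; lra). nra. }
  assert (A : (t-s)*(f n0 - f x - eps*(n0-x)) >= 0) by (apply Rle_ge, Rmult_le_pos; lra).
  assert (B' : eps*((t-s)*(n0-x)) = eps*((1-t)*(y-n0))) by (rewrite B; reflexivity).
  nra.
Qed.

Lemma submult_aux x y : 1 <= x -> 1 <= y -> x*y <= n0*n0 -> n0 < x*y -> y <= n0 ->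
  F (x*y) <= F x * F y.
Proof.
  intros Hx Hy Hxy Hn Hyn.
  destruct Hsub as [_ [_ [_ [_ [_ Hsm]]]]].
  rewrite (Fge (x*y)) by lra. rewrite (Fle y) by lra.
  pose proof (fge1 y Hy Hyn) as Fy.
  destruct (Rle_lt_dec x n0) as [Hxn|Hxn].
  - rewrite Fle by lra.
    set (x' := n0 / y).
    assert (Hx'y : x'*y = n0) by (unfold x'; field; lra).
    assert (Hx'1 : 1 <= x') by nra.
    assert (Hx'x : x' <= x) by nra.
    pose proof (Hsm x' y Hx'1 Hy ltac:(lra)) as Hs. rewrite Hx'y in Hs.
    pose proof (Hsl x' x Hx'1 Hx'x Hxn) as Sl.
    assert (Hdx : (x*y - n0) = y*(x-x')) by nra.
    assert (eps*y <= m) by (pose proof emn; nra).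
    assert ((f x - f x')*(f y - 1) >= 0) by (apply Rle_ge, Rmult_le_pos; nra).
    assert ((m - eps*y)*(x-x') >= 0) by (apply Rle_ge, Rmult_le_pos; lra).
    nra.
  - rewrite Fge by lra.
    assert (Hyx : y*x <= n0*n0) by lra.
    assert (x <= n0*n0) by nra.
    pose proof (fge1 n0 ltac:(lra) ltac:(lra)) as Fn.
    assert (eps*x <= m) by nra.
    assert (eps*(x-n0)*(f y - 1) >= 0) by (apply Rle_ge, Rmult_le_pos; nra).
    assert ((f n0 - 1) * (f y - 1) >= 0) by (apply Rle_ge, Rmult_le_pos; nra).
    assert ((m - eps*x)*(y-1) >= 0) by (apply Rle_ge, Rmult_le_pos; lra).
    nra.
Qed.
End M.

Lemma Smin_repr n0 eps f x : S_ext f n0 eps x = f (Rmin x n0) + eps * Rmax (x - n0) 0.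
Proof.
  unfold S_ext, Rmin, Rmax.
  destruct (Rle_dec x n0); destruct (Rle_dec x n0); try lra;
  destruct (Rle_dec (x-n0) 0); try lra; ring.
Qed.

Lemma rmin_lip a b c : Rabs (Rmin a c - Rmin b c) <= Rabs (a - b).
Proof. unfold Rmin; destruct (Rle_dec a c); destruct (Rle_dec b c);
  unfold Rabs; repeat destruct Rcase_abs; lra. Qed.
Lemma rmax_lip a b c : Rabs (Rmax (a-c) 0 - Rmax (b-c) 0) <= Rabs (a - b).
Proof. unfold Rmax; destruct (Rle_dec (a-c) 0); destruct (Rle_dec (b-c) 0);
  unfold Rabs; repeat destruct Rcase_abs; lra. Qed.

Theorem lemma2p2 (n0 : R) (S : R -> R) :
  2 <= n0 -> submultiplicative_on n0 S ->
  exists eps0, 0 < eps0 /\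
    forall eps, 0 < eps < eps0 -> submultiplicative_on (n0 ^ 2) (S_ext S n0 eps).
Proof.
  rename S into f. intros H2 Hsub.
  destruct (slope_lb n0 f H2 Hsub) as [m [Hm Hsl]].
  exists (m / (n0*n0)). split.
  { apply Rdiv_lt_0_compat; nra. }
  intros eps [He He0].
  assert (Hem : eps*(n0*n0) <= m).
  { assert (eps*(n0*n0) < m/(n0*n0)*(n0*n0)) by (apply Rmult_lt_compat_r; nra).
    replace (m/(n0*n0)*(n0*n0)) with m in H by (field; nra). lra. }
  replace (n0^2) with (n0*n0) by ring.
  pose proof Hsub as [[n [p [Hp0 [Hpn [Hinc Haff]]]]] [Hcont [Hsi [Hcc [H12 Hsm]]]]].
  set (F := S_ext f n0 eps).
  assert (Hnn : n0 < n0*n0) by nra.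
  split; [|split; [|split; [|split; [|split]]]].
  -
    exists (S n), (fun i => if Nat.leb i n then p i else n0*n0).
    split; [simpl; exact Hp0|]. split.
    { rewrite (proj2 (Nat.leb_gt (S n) n)) by lia. reflexivity. }
    split.
    + intros i Hi. destruct (Nat.eq_dec i n) as [->|Hne].
      * rewrite Nat.leb_refl, (proj2 (Nat.leb_gt (S n) n)) by lia. lra.
      * rewrite (proj2 (Nat.leb_le i n)) by lia. rewrite (proj2 (Nat.leb_le (S i) n)) by lia.
        apply Hinc. lia.
    + intros i Hi. destruct (Nat.eq_dec i n) as [->|Hne].
      * rewrite Nat.leb_refl, (proj2 (Nat.leb_gt (S n) n)) by lia.
        exists eps, (f n0 - eps*n0). intros x Hx. rewrite Hpn in Hx.
        unfold F. rewrite Fge by lra. ring.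
      * rewrite (proj2 (Nat.leb_le i n)) by lia. rewrite (proj2 (Nat.leb_le (S i) n)) by lia.
        destruct (Haff i ltac:(lia)) as [a [c Hac]]. exists a, c. intros x Hx.
        assert (p (S i) <= p n) by (apply (mono_p n p Hinc); lia).
        unfold F. rewrite Fle by lra. apply Hac; exact Hx.
  -
    intros x Hx e He'.
    assert (Hxm : 1 <= Rmin x n0 <= n0).
    { unfold Rmin; destruct (Rle_dec x n0); lra. }
    destruct (Hcont (Rmin x n0) Hxm (e/2) ltac:(lra)) as [d [Hd Hdd]].
    exists (Rmin d (e/(2*eps))). split.
    { apply Rmin_pos; [lra|apply Rdiv_lt_0_compat; lra]. }
    intros y Hy Hyx.
    assert (Hd1 : Rabs (y - x) < d) by (pose proof (Rmin_l d (e/(2*eps))); lra).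
    assert (Hd2 : Rabs (y - x) < e/(2*eps)) by (pose proof (Rmin_r d (e/(2*eps))); lra).
    unfold F. rewrite !Smin_repr.
    assert (Hym : 1 <= Rmin y n0 <= n0).
    { unfold Rmin; destruct (Rle_dec y n0); lra. }
    pose proof (Hdd (Rmin y n0) Hym ltac:(pose proof (rmin_lip y x n0); lra)) as A.
    pose proof (rmax_lip y x n0) as B.
    assert (B2 : eps * Rabs (Rmax (y - n0) 0 - Rmax (x - n0) 0) < e/2).
    { assert (eps * Rabs (y-x) < eps*(e/(2*eps))) by (apply Rmult_lt_compat_l; lra).
      replace (eps*(e/(2*eps))) with (e/2) in H by (field; lra).
      assert (eps * Rabs (Rmax (y - n0) 0 - Rmax (x - n0) 0) <= eps*Rabs (y-x))
        by (apply Rmult_le_compat_l; lra). lra. }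
    rewrite <- (Rabs_pos_eq eps) in B2 by lra. rewrite <- Rabs_mult in B2.
    pose proof (Rabs_triang (f (Rmin y n0) - f (Rmin x n0)) (eps * (Rmax (y - n0) 0 - Rmax (x - n0) 0))) as T.
    replace (f (Rmin y n0) + eps * Rmax (y - n0) 0 - (f (Rmin x n0) + eps * Rmax (x - n0) 0)) with
      (f (Rmin y n0) - f (Rmin x n0) + eps * (Rmax (y - n0) 0 - Rmax (x - n0) 0)) by ring.
    lra.
  -
    intros x y Hx Hy Hxy. unfold F.
    destruct (Rle_lt_dec y n0).
    + rewrite !Fle by lra. apply Hsi; lra.
    + rewrite (Fge _ _ _ y) by lra.
      destruct (Rle_lt_dec x n0).
      * rewrite Fle by lra.
        assert (f x <= f n0).
        { destruct (Rle_lt_dec n0 x). assert (x = n0) by lra. subst x. lra.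
          apply Rlt_le, Hsi; lra. }
        nra.
      * rewrite Fge by lra. nra.
  -
    intros x y t Hx Hy Ht. unfold F.
    destruct (Rle_lt_dec x y).
    + apply (conc_aux n0 eps m f H2 Hsub Hsl He Hem); lra.
    + pose proof (conc_aux n0 eps m f H2 Hsub Hsl He Hem y x (1-t) ltac:(lra) ltac:(lra) ltac:(lra)).
      replace (1 - (1-t)) with t in H by ring.
      replace (t * x + (1 - t) * y) with ((1-t)*y + t*x) by ring. lra.
  - intros x Hx. unfold F. rewrite Fle by lra. apply H12; exact Hx.
  - intros x y Hx Hy Hxy. unfold F.
    destruct (Rle_lt_dec (x*y) n0).
    + assert (x <= n0) by nra. assert (y <= n0) by nra.
      rewrite !Fle by lra. apply Hsm; lra.
    + destruct (Rle_lt_dec y n0).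
      * apply (submult_aux n0 eps m f H2 Hsub Hm Hsl He Hem); lra.
      * assert (x <= n0) by nra. rewrite Rmult_comm. rewrite (Rmult_comm (S_ext f n0 eps x)).
        apply (submult_aux n0 eps m f H2 Hsub Hm Hsl He Hem); nra.
Qed.
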